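(* For every $x=(x_1^\top,\dots,x_m^\top)^\top\in\mathbb R^d$ with $x_i\in\mathbb R^{\bar d}$, $$\max\Big\{\|Hx\|,\ \min_{\gamma}\|\nabla f_0(x)+H^\top\gamma\|\Big\}\ \ge\ \frac{\sqrt m}{2}\Big\|\frac1m\sum_{i=1}^m\nabla f_i(\bar x)\Big\|,\qquad\text{where }\bar x=\frac1m\sum_{i=1}^mx_i.$$
   Context: Fix $\epsilon\in(0,1)$, $L_f>0$, integers $m_1\ge2$, $m_2\ge1$ with $m_1m_2$ even, $m=3m_1m_2$, an odd integer $\bar d\ge5$, $d=m\bar d$; $[z]_j$ is the $j$-th coordinate. $J_p\in\mathbb R^{(p-1)\times p}$ has $-1$ at $(k,k)$, $1$ at $(k,k+1)$, zero elsewhere; $H=mL_f(J_m\otimes I_{\bar d})$. $\Psi(u)=0$ ($u\le0$), $1-e^{-u^2}$ ($u>0$); $\Phi(v)=4\arctan v+2\pi$. For $z\in\mathbb R^{\bar d}$: $\varphi(z,1)=-\Psi(1)\Phi([z]_1)$, $\varphi(z,j)=\Psi(-[z]_{j-1})\Phi(-[z]_j)-\Psi([z]_{j-1})\Phi([z]_j)$ ($2\le j\le\bar d$); $h_i(z)=\varphi(z,1)+3\sum_{j=1}^{\lfloor\bar d/2\rfloor}\varphi(z,2j)$ for $1\le i\le m/3$, $h_i(z)=\varphi(z,1)$ for $m/3+1\le i\le 2m/3$, $h_i(z)=\varphi(z,1)+3\sum_{j=1}^{\lfloor\bar d/2\rfloor}\varphi(z,2j+1)$ for $2m/3+1\le i\le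 m$. $f_i(z)=\frac{300\pi\epsilon^2}{mL_f}h_i(\frac{\sqrt mL_fz}{150\pi\epsilon})$, $f_0(x)=\sum_{i=1}^mf_i(x_i)$. *)

(* Defs.v *)
From Stdlib Require Import Reals Lra Lia Arith.
From Coquelicot Require Import Coquelicot.
Open Scope R_scope.

(* Vectors in R^n are functions nat -> R (only indices < n matter);
   matrices are functions nat -> nat -> R. All indices are 0-based. *)

Fixpoint vsum (n : nat) (f : nat -> R) : R :=
  match n with
  | O => 0
  | S k => vsum k f + f k
  end.

Definition vnorm (n : nat) (v : nat -> R) : R := sqrt (vsum n (fun i => v i ^ 2)).

Definition matvec (A : nat -> nat -> R) (n : nat) (v : nat -> R) : nat -> R :=
  fun i => vsum n (fun j => A i j * v j).

Definition transpose (A : nat -> nat -> R) : nat -> nat -> R := fun i j => A j i.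

Definition Jmat (p : nat) : nat -> nat -> R := fun i j =>
  if (Nat.ltb i (p - 1) && Nat.ltb j p)%bool then
    (if Nat.eqb j i then -1 else if Nat.eqb j (S i) then 1 else 0)
  else 0.

Definition Imat (q : nat) : nat -> nat -> R := fun i j =>
  if (Nat.ltb i q && Nat.eqb i j)%bool then 1 else 0.

Definition kron (A B : nat -> nat -> R) (p2 q2 : nat) : nat -> nat -> R :=
  fun i j => A (i / p2)%nat (j / q2)%nat * B (i mod p2)%nat (j mod q2)%nat.

Definition Hmat (Lf : R) (m dbar : nat) : nat -> nat -> R :=
  fun i j => INR m * Lf * kron (Jmat m) (Imat dbar) dbar dbar i j.

Definition Psi (u : R) : R := if Rle_dec u 0 then 0 else 1 - exp (- (u ^ 2)).
Definition Phi (v : R) : R := 4 * atan v + 2 * PI.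

(* [z]_j, 1-indexed coordinate *)
Definition coord (z : nat -> R) (j : nat) : R := z (j - 1)%nat.

Definition varphi (z : nat -> R) (j : nat) : R :=
  if Nat.eqb j 1 then - Psi 1 * Phi (coord z 1)
  else Psi (- coord z (j - 1)) * Phi (- coord z j)
       - Psi (coord z (j - 1)) * Phi (coord z j).

(* h_i, i 1-indexed in 1..m *)
Definition hfun (m dbar i : nat) (z : nat -> R) : R :=
  if Nat.leb i (m / 3) then
    varphi z 1 + 3 * vsum (dbar / 2) (fun j => varphi z (2 * (S j)))
  else if Nat.leb i (2 * m / 3) then varphi z 1
  else varphi z 1 + 3 * vsum (dbar / 2) (fun j => varphi z (2 * (S j) + 1)).

Definition ffun (eps Lf : R) (m dbar i : nat) (z : nat -> R) : R :=
  (300 * PI * eps ^ 2 / (INR m * Lf)) *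
  hfun m dbar i (fun k => sqrt (INR m) * Lf * z k / (150 * PI * eps)).

(* block i (0-indexed) of x in R^{m dbar}: x_{i+1} in the paper *)
Definition block (dbar : nat) (x : nat -> R) (i : nat) : nat -> R :=
  fun k => x (i * dbar + k)%nat.

Definition f0 (eps Lf : R) (m dbar : nat) (x : nat -> R) : R :=
  vsum m (fun i => ffun eps Lf m dbar (S i) (block dbar x i)).

Definition partial (g : (nat -> R) -> R) (k : nat) (x : nat -> R) : R :=
  Derive (fun t => g (fun l => if Nat.eqb l k then x l + t else x l)) 0.

Definition grad (g : (nat -> R) -> R) (x : nat -> R) : nat -> R :=
  fun k => partial g k x.

(* Main.v *)
Require Import Defs.
From Stdlib Require Import Reals Arith.
From Coquelicot Require Import Coquelicot.
From Stdlib Require Import Lra Lia Psatz FunctionalExtensionality.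
Open Scope R_scope.

Lemma vsum_ext n f g : (forall i, (i < n)%nat -> f i = g i) -> vsum n f = vsum n g.
Proof. induction n; simpl; intros H; auto. rewrite IHn, H; auto; intros; apply H; lia. Qed.

Lemma vsum_plus n f g : vsum n (fun i => f i + g i) = vsum n f + vsum n g.
Proof. induction n; simpl; [lra|]. rewrite IHn; lra. Qed.

Lemma vsum_minus n f g : vsum n (fun i => f i - g i) = vsum n f - vsum n g.
Proof. induction n; simpl; [lra|]. rewrite IHn; lra. Qed.

Lemma vsum_scal n c f : vsum n (fun i => c * f i) = c * vsum n f.
Proof. induction n; simpl; [lra|]. rewrite IHn; lra. Qed.

Lemma vsum_const n c : vsum n (fun _ => c) = INR n * c.
Proof. induction n; simpl vsum; [simpl; lra|]. rewrite IHn, S_INR; lra. Qed.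

Lemma vsum_zero n f : (forall i, (i < n)%nat -> f i = 0) -> vsum n f = 0.
Proof. intros H; rewrite (vsum_ext n f (fun _ => 0)); auto. rewrite vsum_const; lra. Qed.

Lemma vsum_le n f g : (forall i, (i < n)%nat -> f i <= g i) -> vsum n f <= vsum n g.
Proof. induction n; simpl; intros H; [lra|]. assert (f n <= g n) by (apply H; lia).
 assert (vsum n f <= vsum n g) by (apply IHn; intros; apply H; lia). lra. Qed.

Lemma vsum_nonneg n f : (forall i, (i < n)%nat -> 0 <= f i) -> 0 <= vsum n f.
Proof. intros H. rewrite <- (vsum_zero n (fun _ => 0)) by auto. apply vsum_le; auto. Qed.

Lemma vsum_mono n p f : (n <= p)%nat -> (forall i, (i < p)%nat -> 0 <= f i) -> vsum n f <= vsum p f.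
Proof. induction 1; intros Hf; [lra|]. simpl. assert (0 <= f m) by (apply Hf; lia).
 assert (vsum n f <= vsum m f) by (apply IHle; intros; apply Hf; lia). lra. Qed.

Lemma vsum_single n f r : (r < n)%nat -> (forall i, (i < n)%nat -> i <> r -> f i = 0) -> vsum n f = f r.
Proof. induction n; intros Hr H; [lia|]. simpl. destruct (Nat.eq_dec n r).
 - subst. rewrite vsum_zero; [lra|]. intros; apply H; lia.
 - rewrite IHn; [rewrite (H n); [lra|lia|auto]|lia|]. intros; apply H; lia. Qed.

Lemma vsum_two n f r1 r2 : (r1 < n)%nat -> (r2 < n)%nat -> r1 <> r2 ->
  (forall i, (i < n)%nat -> i <> r1 -> i <> r2 -> f i = 0) -> vsum n f = f r1 + f r2.
Proof. induction n; intros H1 H2 Hne H; [lia|]. simpl. destruct (Nat.eq_dec n r1).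
 - subst. rewrite (vsum_single _ _ r2); [lra|lia|]. intros; apply H; lia.
 - destruct (Nat.eq_dec n r2).
   + subst. rewrite (vsum_single _ _ r1); [lra|lia|]. intros; apply H; lia.
   + rewrite IHn; try lia. rewrite (H n); [lra|lia|auto|auto]. intros; apply H; lia. Qed.

Lemma vsum_term_le n f r : (r < n)%nat -> (forall i, (i < n)%nat -> 0 <= f i) -> f r <= vsum n f.
Proof. intros Hr H.
 assert (E := vsum_single n (fun i => if Nat.eqb i r then f i else 0) r Hr).
 cbv beta in E. rewrite Nat.eqb_refl in E. rewrite <- E.
 - apply vsum_le. intros i Hi. destruct (Nat.eqb_spec i r); [lra|apply H; auto].
 - intros i _ Hi. destruct (Nat.eqb_spec i r); [lia|auto]. Qed.

Lemma vsum_swap p q F : vsum p (fun i => vsum q (fun j => F i j)) = vsum q (fun j => vsum p (fun i => F i j)).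
Proof. induction p; simpl. - rewrite vsum_zero; auto. - rewrite IHp, <- vsum_plus. auto. Qed.

Lemma vsum_flat p q f : vsum (p * q) f = vsum p (fun i => vsum q (fun r => f (i * q + r)%nat)).
Proof. induction p; simpl; auto. replace (q + p * q)%nat with (p * q + q)%nat by lia.
 rewrite <- IHp. clear IHp. induction q; simpl. rewrite Nat.add_0_r; lra.
 replace (p * S q + S q)%nat with (S (p * S q + q)) by lia. simpl.
Abort.

Lemma vsum_app a b f : vsum (a + b) f = vsum a f + vsum b (fun r => f (a + r)%nat).
Proof. induction b; simpl. rewrite Nat.add_0_r; lra. rewrite Nat.add_succ_r; simpl. rewrite IHb; lra. Qed.

Lemma vsum_flat p q f : vsum (p * q) f = vsum p (fun i => vsum q (fun r => f (i * q + r)%nat)).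
Proof. induction p; simpl; auto. replace (q + p * q)%nat with (p * q + q)%nat by lia.
 rewrite vsum_app, IHp. auto. Qed.

Lemma cauchy n f : (vsum n f)^2 <= INR n * vsum n (fun i => f i ^ 2).
Proof. induction n; cbn [vsum]. simpl; lra. rewrite S_INR.
 set (S := vsum n f) in *. set (Q := vsum n (fun i => f i ^ 2)) in *. set (x := f n).
 assert (0 <= INR n) by apply pos_INR.
 assert (0 <= Q) by (apply vsum_nonneg; intros; apply pow2_ge_0).
 destruct (Req_dec (INR n) 0) as [E|E].
 - rewrite E in *. assert (HS0 : S = 0) by nra. rewrite HS0. nra.
 - assert (0 < INR n) by lra.
   assert (INR n * (Q + INR n * x^2 - 2 * S * x) >= 0).
   { assert (0 <= (S - INR n * x)^2) by apply pow2_ge_0. nra. }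
   assert (Q + INR n * x^2 - 2 * S * x >= 0).
   { destruct (Rle_dec 0 (Q + INR n * x^2 - 2 * S * x)); [lra|].
     assert (INR n * (Q + INR n * x^2 - 2 * S * x) < 0) by (apply Rmult_pos_neg; lra). lra. }
   nra. Qed.

Lemma vsum_pairs K g : vsum (2 * K) g = vsum K (fun j => g (2 * j)%nat + g (2 * j + 1)%nat).
Proof. induction K. simpl; auto. cbn [vsum]. rewrite <- IHK.
 replace (2 * S K)%nat with (2 * K + 2)%nat by lia. rewrite vsum_app. cbn [vsum].
 replace (2 * K + 0)%nat with (K + (K + 0))%nat by lia.
 replace (2 * K + 1)%nat with (K + (K + 0) + 1)%nat by lia.
 replace (2 * K)%nat with (K + (K + 0))%nat by lia. lra. Qed.

Lemma vsum_odd_A K f : vsum (2 * K + 1) f = vsum K (fun j => f (2 * j)%nat + f (2 * j + 1)%nat) + f (2 * K)%nat.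
Proof. rewrite vsum_app, vsum_pairs. cbn [vsum]. rewrite Nat.add_0_r. lra. Qed.

Lemma vsum_odd_B K f : vsum (2 * K + 1) f = f 0%nat + vsum K (fun j => f (2 * j + 1)%nat + f (2 * j + 2)%nat).
Proof. replace (2 * K + 1)%nat with (1 + 2 * K)%nat by lia. rewrite vsum_app, vsum_pairs. cbn [vsum].
 f_equal; [lra|]. apply vsum_ext; intros. f_equal; f_equal; lia. Qed.

Definition dPsi (u : R) : R := if Rle_dec u 0 then 0 else 2 * u * exp (- (u ^ 2)).
Definition dPhi (v : R) : R := 4 / (1 + v ^ 2).

Lemma locally_ball_R (u e : R) (P : R -> Prop) : 0 < e -> (forall t, Rabs (t - u) < e -> P t) -> locally u P.
Proof. intros He H. exists (mkposreal e He). intros t Ht. apply H. exact Ht. Qed.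

Lemma Psi_derive u : is_derive Psi u (dPsi u).
Proof.
 unfold dPsi. destruct (Rle_dec u 0) as [Hu|Hu].
 - destruct (Req_dec u 0) as [E|E].
   + subst. apply is_derive_Reals. intros e He. exists (mkposreal e He). intros h Hh0 Hh.
     simpl in Hh. unfold Psi. rewrite Rplus_0_l. destruct (Rle_dec 0 0); [|lra].
     destruct (Rle_dec h 0).
     * replace ((0 - 0) / h - 0) with 0 by (field; auto). rewrite Rabs_R0; lra.
     * assert (1 - h^2 <= exp (-(h^2))).
       { destruct (Req_dec (h^2) 0). rewrite H, Ropp_0, exp_0; lra.
         assert (1 + - (h^2) < exp (- (h^2))) by (apply exp_ineq1; lra). lra. }
       assert (exp (-(h^2)) < 1). { rewrite <- exp_0. apply exp_increasing. nra. }
       assert (Hh1 : 0 < h) by lra.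
       assert (Ht : h * / h = 1) by (field; lra). assert (0 < / h) by (apply Rinv_0_lt_compat; lra).
       unfold Rdiv. rewrite Rminus_0_r, Rminus_0_r. rewrite Rabs_pos_eq by nra.
       rewrite Rabs_pos_eq in Hh by lra.
       assert ((1 - exp (- h^2)) * / h <= h).
       { assert ((h^2 - (1 - exp (- h^2))) * / h >= 0) by nra. nra. }
       lra.
   + apply (is_derive_ext_loc (fun _ => 0)). 
     apply (locally_ball_R u (-u)); [lra|]. intros t Ht. unfold Psi. destruct (Rle_dec t 0); auto.
     apply Rabs_def2 in Ht. lra.
     apply (is_derive_const (V:=R_NormedModule)).
 - apply (is_derive_ext_loc (fun t => 1 - exp (- (t ^ 2)))).
   apply (locally_ball_R u u); [lra|]. intros t Ht. unfold Psi. destruct (Rle_dec t 0); auto.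
   apply Rabs_def2 in Ht. lra.
   auto_derive; auto. replace (u * (u * 1)) with (u ^ 2) by ring. ring.
Qed.

Lemma Phi_derive v : is_derive Phi v (dPhi v).
Proof. unfold Phi, dPhi. auto_derive; auto. unfold Rsqr. field. nra. Qed.

Lemma lip_mvt (f df : R -> R) (L a b : R) : (forall x, is_derive f x (df x)) -> (forall x, Rabs (df x) <= L) ->
  Rabs (f b - f a) <= L * Rabs (b - a).
Proof. intros Hd Hb. destruct (MVT_gen f a b df) as [c [_ Hc]].
 - intros; apply Hd.
 - intros x _. apply continuity_pt_filterlim. apply (ex_derive_continuous (K:=R_AbsRing) (V:=R_NormedModule)). eexists; apply Hd.
 - rewrite Hc, Rabs_mult. apply Rmult_le_compat_r; [apply Rabs_pos|apply Hb]. Qed.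

Lemma Psi_bounds u : 0 <= Psi u <= 1.
Proof. unfold Psi. destruct (Rle_dec u 0); [lra|]. assert (0 < exp (-(u^2))) by apply exp_pos.
 assert (exp (-(u^2)) <= 1). { rewrite <- exp_0. left; apply exp_increasing. nra. } lra. Qed.

Lemma exp_u2 u : 1 + u^2 <= exp (u^2).
Proof. destruct (Req_dec (u^2) 0) as [E|E]. rewrite E, exp_0; lra. left; apply exp_ineq1; auto. Qed.

Lemma dPsi_bounds u : 0 <= dPsi u <= 1.
Proof. unfold dPsi. destruct (Rle_dec u 0); [lra|]. assert (0 < u) by lra.
 assert (E : exp (-(u^2)) * exp (u^2) = 1) by (rewrite <- exp_plus; replace (- u^2 + u^2) with 0 by ring; apply exp_0).
 assert (0 < exp (-(u^2))) by apply exp_pos. assert (H2 := exp_u2 u). split. nra.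
 assert (0 <= (u-1)^2) by apply pow2_ge_0. assert (2 * u <= exp (u^2)) by nra.
 set (p := exp (-(u^2))) in *. set (q := exp (u^2)) in *.
 assert (0 <= p * (q - 2 * u)) by (apply Rmult_le_pos; lra). nra. Qed.

Lemma Phi_bounds v : 0 <= Phi v <= 4 * PI.
Proof. unfold Phi. assert (H := atan_bound v). lra. Qed.

Lemma dPhi_bounds v : 0 <= dPhi v <= 4.
Proof. unfold dPhi. assert (0 <= v^2) by nra. split.
 apply Rle_mult_inv_pos; lra. apply Rmult_le_reg_r with (1 + v^2); [lra|]. unfold Rdiv.
 rewrite Rmult_assoc, Rinv_l by lra. nra. Qed.

Lemma Psi_lip a b : Rabs (Psi b - Psi a) <= Rabs (b - a).
Proof. rewrite <- (Rmult_1_l (Rabs (b - a))). apply (lip_mvt Psi dPsi). apply Psi_derive.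
 intros x; rewrite Rabs_pos_eq; apply dPsi_bounds. Qed.

Lemma Phi_lip a b : Rabs (Phi b - Phi a) <= 4 * Rabs (b - a).
Proof. apply (lip_mvt Phi dPhi). apply Phi_derive.
 intros x; rewrite Rabs_pos_eq; apply dPhi_bounds. Qed.

Lemma dPhi_lip a b : Rabs (dPhi b - dPhi a) <= 4 * Rabs (b - a).
Proof. apply (lip_mvt dPhi (fun v => - 8 * v / (1 + v^2)^2)).
 - intros v. unfold dPhi. auto_derive. nra. field. nra.
 - intros v. assert (0 <= v^2) by nra. unfold Rdiv. rewrite Rabs_mult, Rabs_inv, (Rabs_pos_eq ((1+v^2)^2)) by nra.
   apply Rmult_le_reg_r with ((1 + v^2)^2); [nra|]. rewrite Rmult_assoc, Rinv_l by nra.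
   rewrite Rabs_mult. replace (Rabs (-8)) with 8 by (rewrite Rabs_left; lra).
   assert (Rabs v <= 1 + v^2). { destruct (Rabs_pos v). apply Rabs_le. nra. nra. }
   assert (Rabs v * Rabs v = v^2) by (rewrite <- Rabs_mult; rewrite Rabs_pos_eq; nra).
   assert (0 <= Rabs v) by apply Rabs_pos. assert (1 + v^2 <= (1+v^2)^2) by nra. nra. Qed.

Definition gP (u : R) := 2 * u * exp (- (u ^ 2)).

Lemma gP_lip a b : Rabs (gP b - gP a) <= 2 * Rabs (b - a).
Proof. apply (lip_mvt gP (fun u => (2 - 4 * u^2) * exp (- (u^2)))).
 - intros u. unfold gP. auto_derive; auto. replace (u * (u * 1)) with (u ^ 2) by ring. ring.
 - intros u. set (y := u^2). assert (0 <= y) by (unfold y; nra).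
   assert (0 < exp (-y)) by apply exp_pos.
   assert (E : exp (-y) * exp y = 1) by (rewrite <- exp_plus; replace (- y + y) with 0 by ring; apply exp_0).
   rewrite Rabs_mult, (Rabs_pos_eq (exp (-y))) by lra.
   assert (Rabs (2 - 4 * y) <= 2 * exp y).
   { assert (1 + y <= exp y) by (destruct (Req_dec y 0) as [E0|E0]; [rewrite E0, exp_0; lra| left; apply exp_ineq1; auto]).
     assert (1 + y/2 <= exp (y/2)) by (destruct (Req_dec (y/2) 0) as [E0|E0]; [rewrite E0, exp_0; lra| left; apply exp_ineq1; auto]).
     assert (exp y = exp (y/2) * exp (y/2)) by (rewrite <- exp_plus; f_equal; field).
     apply Rabs_le; split; nra. }
   nra. Qed.

Lemma dPsi_gP u : dPsi u = gP (Rmax u 0).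
Proof. unfold dPsi, gP, Rmax. destruct (Rle_dec u 0); destruct (Rle_dec u 0); try lra.
 all: ring. Qed.

Lemma dPsi_lip a b : Rabs (dPsi b - dPsi a) <= 2 * Rabs (b - a).
Proof. rewrite !dPsi_gP. eapply Rle_trans; [apply gP_lip|]. apply Rmult_le_compat_l; [lra|].
 unfold Rmax. destruct (Rle_dec b 0); destruct (Rle_dec a 0); unfold Rabs;
 repeat destruct Rcase_abs; lra. Qed.

Definition Pp (a b : R) := Psi (- a) * Phi (- b) - Psi a * Phi b.
Definition Fa (a b : R) := - dPsi (- a) * Phi (- b) - dPsi a * Phi b.
Definition Fb (a b : R) := - Psi (- a) * dPhi (- b) - Psi a * dPhi b.
Definition ee (a : R) := - Psi 1 * dPhi a.

Definition shift (z : nat -> R) (r : nat) (t : R) : nat -> R :=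
  fun l => if Nat.eqb l r then z l + t else z l.

Definition dvarphi (z : nat -> R) (j r : nat) : R :=
  if Nat.eqb j 1 then (if Nat.eqb 0 r then ee (z 0%nat) else 0)
  else (if Nat.eqb (j - 2) r then Fa (z (j - 2)%nat) (z (j - 1)%nat) else 0)
     + (if Nat.eqb (j - 1) r then Fb (z (j - 2)%nat) (z (j - 1)%nat) else 0).

Ltac fixD := repeat first
  [ rewrite (is_derive_unique _ _ _ (Psi_derive _))
  | rewrite (is_derive_unique _ _ _ (Phi_derive _)) ].

Lemma Pp_der a b sa sb : is_derive (fun t => Pp (a + sa * t) (b + sb * t)) 0 (sa * Fa a b + sb * Fb a b).
Proof. unfold Pp, Fa, Fb. auto_derive.
 - repeat split; eexists; first [apply Psi_derive | apply Phi_derive].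
 - fixD. rewrite !Rmult_0_r, !Rplus_0_r. ring. Qed.

Lemma ee_der a s : is_derive (fun t => - Psi 1 * Phi (a + s * t)) 0 (s * ee a).
Proof. unfold ee. auto_derive.
 - eexists; apply Phi_derive.
 - fixD. rewrite !Rmult_0_r, !Rplus_0_r. ring. Qed.

Lemma shift_eq z r t l : shift z r t l = z l + (if Nat.eqb l r then 1 else 0) * t.
Proof. unfold shift. destruct (Nat.eqb l r); ring. Qed.

Lemma varphi_derive z j r : (1 <= j)%nat -> is_derive (fun t => varphi (shift z r t) j) 0 (dvarphi z j r).
Proof. intros Hj. unfold varphi, dvarphi, coord. destruct (Nat.eqb_spec j 1).
 - subst. change (1-1)%nat with 0%nat. apply (is_derive_ext (fun t => - Psi 1 * Phi (z 0%nat + (if Nat.eqb 0 r then 1 else 0) * t))).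
   + intros t. rewrite shift_eq. reflexivity.
   + replace (if Nat.eqb 0 r then ee (z 0%nat) else 0) with ((if Nat.eqb 0 r then 1 else 0) * ee (z 0%nat))
       by (destruct (Nat.eqb 0 r); ring). apply ee_der.
 - replace (j - 1 - 1)%nat with (j - 2)%nat by lia.
   apply (is_derive_ext (fun t => Pp (z (j - 2)%nat + (if Nat.eqb (j - 2) r then 1 else 0) * t)
        (z (j - 1)%nat + (if Nat.eqb (j - 1) r then 1 else 0) * t))).
   + intros t. rewrite !shift_eq. reflexivity.
   + replace ((if Nat.eqb (j - 2) r then Fa (z (j - 2)%nat) (z (j - 1)%nat) else 0) +
       (if Nat.eqb (j - 1) r then Fb (z (j - 2)%nat) (z (j - 1)%nat) else 0)) with
       ((if Nat.eqb (j - 2) r then 1 else 0) * Fa (z (j - 2)%nat) (z (j - 1)%nat) +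
        (if Nat.eqb (j - 1) r then 1 else 0) * Fb (z (j - 2)%nat) (z (j - 1)%nat))
       by (destruct (Nat.eqb (j-2) r); destruct (Nat.eqb (j-1) r); ring).
     apply Pp_der. Qed.

Lemma is_derive_vsum n (F : nat -> R -> R) (dF : nat -> R) :
  (forall j, (j < n)%nat -> is_derive (fun t => F j t) 0 (dF j)) ->
  is_derive (fun t => vsum n (fun j => F j t)) 0 (vsum n dF).
Proof. induction n; intros H; simpl.
 - apply (is_derive_const (V:=R_NormedModule)).
 - apply (is_derive_plus (fun t => vsum n (fun j => F j t)) (fun t => F n t)).
   apply IHn; intros; apply H; lia. apply H; lia. Qed.

Definition dh (m n i : nat) (z : nat -> R) (r : nat) : R :=
  if Nat.leb i (m / 3) then dvarphi z 1 r + 3 * vsum (n / 2) (fun j => dvarphi z (2 * S j) r)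
  else if Nat.leb i (2 * m / 3) then dvarphi z 1 r
  else dvarphi z 1 r + 3 * vsum (n / 2) (fun j => dvarphi z (2 * S j + 1) r).

Lemma hfun_derive m n i z r : is_derive (fun t => hfun m n i (shift z r t)) 0 (dh m n i z r).
Proof. unfold hfun, dh. destruct (Nat.leb i (m/3)); [|destruct (Nat.leb i (2*m/3))].
 - apply (is_derive_plus (fun t => varphi (shift z r t) 1) (fun t => 3 * vsum (n/2) (fun j => varphi (shift z r t) (2 * S j)))).
   apply varphi_derive; lia. apply is_derive_scal. apply (is_derive_vsum _ (fun j t => varphi (shift z r t) (2 * S j))).
   intros; apply varphi_derive; lia.
 - apply varphi_derive; lia.
 - apply (is_derive_plus (fun t => varphi (shift z r t) 1) (fun t => 3 * vsum (n/2) (fun j => varphi (shift z r t) (2 * S j + 1)))).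
   apply varphi_derive; lia. apply is_derive_scal. apply (is_derive_vsum _ (fun j t => varphi (shift z r t) (2 * S j + 1))).
   intros; apply varphi_derive; lia. Qed.

Definition cc (eps Lf : R) (m : nat) := 300 * PI * eps ^ 2 / (INR m * Lf).
Definition sc (eps Lf : R) (m : nat) := sqrt (INR m) * Lf / (150 * PI * eps).
Definition scaled (eps Lf : R) (m : nat) (z : nat -> R) : nat -> R :=
  fun k => sqrt (INR m) * Lf * z k / (150 * PI * eps).

Lemma ffun_derive eps Lf m n i z r :
  is_derive (fun t => ffun eps Lf m n i (shift z r t)) 0 (cc eps Lf m * (sc eps Lf m * dh m n i (scaled eps Lf m z) r)).
Proof. unfold ffun. fold (cc eps Lf m).
 apply (is_derive_ext (fun t => cc eps Lf m * hfun m n i (shift (scaled eps Lf m z) r (sc eps Lf m * t)))).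
 - intros t. assert (E : shift (scaled eps Lf m z) r (sc eps Lf m * t) = 
     (fun k => sqrt (INR m) * Lf * shift z r t k / (150 * PI * eps))).
   { apply functional_extensionality. intros k. unfold shift, scaled, sc.
     destruct (Nat.eqb k r); unfold Rdiv; ring. }
   rewrite E. reflexivity.
 - apply is_derive_scal.
   apply (is_derive_comp (fun s => hfun m n i (shift (scaled eps Lf m z) r s)) (fun t => sc eps Lf m * t)).
   + rewrite Rmult_0_r. apply hfun_derive.
   + auto_derive; auto. ring.
Qed.

Lemma grad_ffun eps Lf m n i z r :
  grad (ffun eps Lf m n i) z r = cc eps Lf m * (sc eps Lf m * dh m n i (scaled eps Lf m z) r).
Proof. unfold grad, partial. apply is_derive_unique. apply (ffun_derive eps Lf m n i z r). Qed.


Lemma prod_bound x1 y1 x2 y2 X Y Lx Ly : Rabs (x1 - x2) <= Lx -> Rabs (y1 - y2) <= Ly ->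
  Rabs y1 <= Y -> Rabs x2 <= X -> Rabs (x1 * y1 - x2 * y2) <= Lx * Y + X * Ly.
Proof. intros H1 H2 H3 H4. replace (x1 * y1 - x2 * y2) with ((x1 - x2) * y1 + x2 * (y1 - y2)) by ring.
 eapply Rle_trans; [apply Rabs_triang|]. rewrite !Rabs_mult.
 assert (0 <= Rabs (x1 - x2)) by apply Rabs_pos. assert (0 <= Rabs y1) by apply Rabs_pos.
 assert (0 <= Rabs x2) by apply Rabs_pos. assert (0 <= Rabs (y1 - y2)) by apply Rabs_pos.
 apply Rplus_le_compat; apply Rmult_le_compat; auto. Qed.

Lemma abs_opp_diff a b : Rabs (- a - - b) = Rabs (a - b).
Proof. replace (- a - - b) with (- (a - b)) by ring. apply Rabs_Ropp. Qed.

Lemma Fa_lip a b a' b' : Rabs (Fa a b - Fa a' b') <= 16 * PI * Rabs (a - a') + 8 * Rabs (b - b').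
Proof. unfold Fa.
 assert (H1 : Rabs (dPsi (-a) * Phi (-b) - dPsi (-a') * Phi (-b')) <= (2 * Rabs (a - a')) * (4 * PI) + 1 * (4 * Rabs (b - b'))).
 { apply prod_bound.
   - rewrite <- (abs_opp_diff a a'). apply dPsi_lip.
   - rewrite <- (abs_opp_diff b b'). apply Phi_lip.
   - rewrite Rabs_pos_eq; apply Phi_bounds.
   - rewrite Rabs_pos_eq; apply dPsi_bounds. }
 assert (H2 : Rabs (dPsi a * Phi b - dPsi a' * Phi b') <= (2 * Rabs (a - a')) * (4 * PI) + 1 * (4 * Rabs (b - b'))).
 { apply prod_bound.
   - apply dPsi_lip.
   - apply Phi_lip.
   - rewrite Rabs_pos_eq; apply Phi_bounds.
   - rewrite Rabs_pos_eq; apply dPsi_bounds. }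
 replace (- dPsi (- a) * Phi (- b) - dPsi a * Phi b - (- dPsi (- a') * Phi (- b') - dPsi a' * Phi b'))
   with (- (dPsi (-a) * Phi (-b) - dPsi (-a') * Phi (-b')) + - (dPsi a * Phi b - dPsi a' * Phi b')) by ring.
 eapply Rle_trans; [apply Rabs_triang|]. rewrite !Rabs_Ropp. lra. Qed.

Lemma Fb_lip a b a' b' : Rabs (Fb a b - Fb a' b') <= 8 * Rabs (a - a') + 8 * Rabs (b - b').
Proof. unfold Fb.
 assert (H1 : Rabs (Psi (-a) * dPhi (-b) - Psi (-a') * dPhi (-b')) <= (Rabs (a - a')) * 4 + 1 * (4 * Rabs (b - b'))).
 { apply prod_bound.
   - rewrite <- (abs_opp_diff a a'). apply Psi_lip.
   - rewrite <- (abs_opp_diff b b'). apply dPhi_lip.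
   - rewrite Rabs_pos_eq; apply dPhi_bounds.
   - rewrite Rabs_pos_eq; apply Psi_bounds. }
 assert (H2 : Rabs (Psi a * dPhi b - Psi a' * dPhi b') <= (Rabs (a - a')) * 4 + 1 * (4 * Rabs (b - b'))).
 { apply prod_bound.
   - apply Psi_lip.
   - apply dPhi_lip.
   - rewrite Rabs_pos_eq; apply dPhi_bounds.
   - rewrite Rabs_pos_eq; apply Psi_bounds. }
 replace (- Psi (- a) * dPhi (- b) - Psi a * dPhi b - (- Psi (- a') * dPhi (- b') - Psi a' * dPhi b'))
   with (- (Psi (-a) * dPhi (-b) - Psi (-a') * dPhi (-b')) + - (Psi a * dPhi b - Psi a' * dPhi b')) by ring.
 eapply Rle_trans; [apply Rabs_triang|]. rewrite !Rabs_Ropp. lra. Qed.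

Lemma ee_lip a a' : Rabs (ee a - ee a') <= 4 * Rabs (a - a').
Proof. unfold ee. replace (- Psi 1 * dPhi a - - Psi 1 * dPhi a') with (- Psi 1 * (dPhi a - dPhi a')) by ring.
 rewrite Rabs_mult, Rabs_Ropp, Rabs_pos_eq by apply Psi_bounds.
 assert (H := Psi_bounds 1). assert (H2 : Rabs (dPhi a - dPhi a') <= 4 * Rabs (a - a')).
 { apply dPhi_lip. }
 assert (0 <= Rabs (dPhi a - dPhi a')) by apply Rabs_pos. nra. Qed.

Definition LL := (48 * PI + 4) ^ 2 + 1728.

Lemma pair_ineq E A B da db : Rabs E <= 4 * Rabs da ->
  Rabs A <= 16 * PI * Rabs da + 8 * Rabs db -> Rabs B <= 8 * Rabs da + 8 * Rabs db ->
  (E + 3 * A) ^ 2 + (3 * B) ^ 2 <= LL * (da ^ 2 + db ^ 2).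
Proof. intros HE HA HB. unfold LL. set (X := Rabs da) in *. set (Y := Rabs db) in *.
 assert (0 <= X) by apply Rabs_pos. assert (0 <= Y) by apply Rabs_pos.
 assert (Ex : da ^ 2 = X ^ 2) by (unfold X; rewrite <- pow2_abs; auto).
 assert (Ey : db ^ 2 = Y ^ 2) by (unfold Y; rewrite <- pow2_abs; auto).
 rewrite Ex, Ey. assert (HPI := PI_RGT_0).
 set (p := 48 * PI + 4). 
 assert (H1 : Rabs (E + 3 * A) <= p * X + 24 * Y).
 { eapply Rle_trans; [apply Rabs_triang|]. rewrite Rabs_mult, (Rabs_pos_eq 3) by lra. unfold p. nra. }
 assert (H2 : Rabs (3 * B) <= 24 * X + 24 * Y).
 { rewrite Rabs_mult, (Rabs_pos_eq 3) by lra. lra. }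
 assert (H1' : (E + 3 * A) ^ 2 <= (p * X + 24 * Y) ^ 2).
 { rewrite <- (pow2_abs (E + 3 * A)). apply pow_incr. split; [apply Rabs_pos|auto]. }
 assert (H2' : (3 * B) ^ 2 <= (24 * X + 24 * Y) ^ 2).
 { rewrite <- (pow2_abs (3 * B)). apply pow_incr. split; [apply Rabs_pos|auto]. }
 assert (0 <= (p * Y - 24 * X) ^ 2) by apply pow2_ge_0.
 assert (0 <= (X - Y) ^ 2) by apply pow2_ge_0.
 nra.
Qed.

Lemma dvarphi_one z r : dvarphi z 1 r = if Nat.eqb 0 r then ee (z 0%nat) else 0.
Proof. reflexivity. Qed.

Lemma dvarphi_even z j r : dvarphi z (2 * S j) r =
  (if Nat.eqb (2 * j) r then Fa (z (2 * j)%nat) (z (2 * j + 1)%nat) else 0) +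
  (if Nat.eqb (2 * j + 1) r then Fb (z (2 * j)%nat) (z (2 * j + 1)%nat) else 0).
Proof. unfold dvarphi. replace (Nat.eqb (2 * S j) 1) with false by (symmetry; apply Nat.eqb_neq; lia).
 replace (2 * S j - 2)%nat with (2 * j)%nat by lia. replace (2 * S j - 1)%nat with (2 * j + 1)%nat by lia. auto. Qed.

Lemma dvarphi_odd z j r : dvarphi z (2 * S j + 1) r =
  (if Nat.eqb (2 * j + 1) r then Fa (z (2 * j + 1)%nat) (z (2 * j + 2)%nat) else 0) +
  (if Nat.eqb (2 * j + 2) r then Fb (z (2 * j + 1)%nat) (z (2 * j + 2)%nat) else 0).
Proof. unfold dvarphi. replace (Nat.eqb (2 * S j + 1) 1) with false by (symmetry; apply Nat.eqb_neq; lia).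
 replace (2 * S j + 1 - 2)%nat with (2 * j + 1)%nat by lia. replace (2 * S j + 1 - 1)%nat with (2 * j + 2)%nat by lia. auto. Qed.

Ltac eqbs := repeat match goal with
  | |- context [Nat.eqb ?a ?b] => first
       [ replace (Nat.eqb a b) with true by (symmetry; apply Nat.eqb_eq; lia)
       | replace (Nat.eqb a b) with false by (symmetry; apply Nat.eqb_neq; lia) ]
  end.

Lemma sumA_even z K j : (j < K)%nat -> vsum K (fun j' => dvarphi z (2 * S j') (2 * j)) = Fa (z (2 * j)%nat) (z (2 * j + 1)%nat).
Proof. intros Hj. rewrite (vsum_single _ _ j Hj).
 - rewrite dvarphi_even. eqbs. ring.
 - intros i Hi Hne. rewrite dvarphi_even. eqbs. ring. Qed.

Lemma sumA_odd z K j : (j < K)%nat -> vsum K (fun j' => dvarphi z (2 * S j') (2 * j + 1)) = Fb (z (2 * j)%nat) (z (2 * j + 1)%nat).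
Proof. intros Hj. rewrite (vsum_single _ _ j Hj).
 - rewrite dvarphi_even. eqbs. ring.
 - intros i Hi Hne. rewrite dvarphi_even. eqbs. ring. Qed.

Lemma sumA_last z K : vsum K (fun j' => dvarphi z (2 * S j') (2 * K)) = 0.
Proof. apply vsum_zero. intros i Hi. rewrite dvarphi_even. eqbs. ring. Qed.

Lemma sumB_zero z K : vsum K (fun j' => dvarphi z (2 * S j' + 1) 0) = 0.
Proof. apply vsum_zero. intros i Hi. rewrite dvarphi_odd. eqbs. ring. Qed.

Lemma sumB_a z K j : (j < K)%nat -> vsum K (fun j' => dvarphi z (2 * S j' + 1) (2 * j + 1)) = Fa (z (2 * j + 1)%nat) (z (2 * j + 2)%nat).
Proof. intros Hj. rewrite (vsum_single _ _ j Hj).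
 - rewrite dvarphi_odd. eqbs. ring.
 - intros i Hi Hne. rewrite dvarphi_odd. eqbs. ring. Qed.

Lemma sumB_b z K j : (j < K)%nat -> vsum K (fun j' => dvarphi z (2 * S j' + 1) (2 * j + 2)) = Fb (z (2 * j + 1)%nat) (z (2 * j + 2)%nat).
Proof. intros Hj. rewrite (vsum_single _ _ j Hj).
 - rewrite dvarphi_odd. eqbs. ring.
 - intros i Hi Hne. rewrite dvarphi_odd. eqbs. ring. Qed.

Lemma LL_ge16 : 16 <= LL.
Proof. unfold LL. assert (H := PI_RGT_0). nra. Qed.

Lemma sq_nonneg_f (f : nat -> R) i : 0 <= f i ^ 2.
Proof. apply pow2_ge_0. Qed.

Lemma dh_lip m n i z w : Nat.Odd n -> (5 <= n)%nat ->
  vsum n (fun r => (dh m n i z r - dh m n i w r) ^ 2) <= LL * vsum n (fun r => (z r - w r) ^ 2).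
Proof. intros Hodd Hn. destruct Hodd as [K HK]. 
 assert (HK2 : (n / 2 = K)%nat). { subst. replace (2 * K + 1)%nat with (1 + K * 2)%nat by lia. rewrite Nat.div_add by lia. auto. }
 assert (H16 := LL_ge16).
 unfold dh. rewrite HK2. destruct (Nat.leb i (m/3)); [|destruct (Nat.leb i (2*m/3))].
 - rewrite HK, !vsum_odd_A.
   assert (0 <= (z (2 * K)%nat - w (2 * K)%nat) ^ 2) by apply pow2_ge_0.
   apply Rle_trans with (vsum K (fun j => LL * ((z (2 * j)%nat - w (2 * j)%nat) ^ 2 + (z (2 * j + 1)%nat - w (2 * j + 1)%nat) ^ 2)) + 0).
   2: { rewrite vsum_scal. nra. }
   apply Rplus_le_compat.
   2: { rewrite !dvarphi_one, !sumA_last. eqbs. right; ring. }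
   apply vsum_le. intros j Hj. rewrite !dvarphi_one. rewrite !sumA_even, !sumA_odd by auto.
     replace (Nat.eqb 0 (2 * j + 1)) with false by (symmetry; apply Nat.eqb_neq; lia).
     replace ((0 + 3 * Fb (z (2 * j)%nat) (z (2 * j + 1)%nat) - (0 + 3 * Fb (w (2 * j)%nat) (w (2 * j + 1)%nat))))
       with (3 * (Fb (z (2 * j)%nat) (z (2 * j + 1)%nat) - Fb (w (2 * j)%nat) (w (2 * j + 1)%nat))) by ring.
     set (E := (if Nat.eqb 0 (2 * j) then ee (z 0%nat) else 0) - (if Nat.eqb 0 (2 * j) then ee (w 0%nat) else 0)).
     replace ((if Nat.eqb 0 (2 * j) then ee (z 0%nat) else 0) + 3 * Fa (z (2 * j)%nat) (z (2 * j + 1)%nat) -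
        ((if Nat.eqb 0 (2 * j) then ee (w 0%nat) else 0) + 3 * Fa (w (2 * j)%nat) (w (2 * j + 1)%nat)))
       with (E + 3 * (Fa (z (2 * j)%nat) (z (2 * j + 1)%nat) - Fa (w (2 * j)%nat) (w (2 * j + 1)%nat))) by (unfold E; ring).
     apply pair_ineq; [| apply Fa_lip | apply Fb_lip].
     unfold E. destruct (Nat.eqb_spec 0 (2 * j)) as [E0|E0].
     + assert (j = 0%nat) by lia. subst j. replace (2 * 0)%nat with 0%nat by lia. apply ee_lip.
     + rewrite Rminus_0_r, Rabs_R0. assert (0 <= Rabs (z (2 * j)%nat - w (2 * j)%nat)) by apply Rabs_pos. lra.
 - rewrite (vsum_single n _ 0) by (try lia; intros r Hr Hr0; rewrite !dvarphi_one; eqbs; ring).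
   rewrite !dvarphi_one. eqbs.
   apply Rle_trans with (16 * (z 0%nat - w 0%nat) ^ 2).
   + rewrite <- (pow2_abs (ee _ - ee _)). rewrite <- (pow2_abs (z 0%nat - w 0%nat)).
     assert (H1 := ee_lip (z 0%nat) (w 0%nat)). assert (0 <= Rabs (ee (z 0%nat) - ee (w 0%nat))) by apply Rabs_pos. nra.
   + assert (H2 := vsum_term_le n (fun r => (z r - w r) ^ 2) 0 ltac:(lia) ltac:(intros; apply pow2_ge_0)).
     cbv beta in H2. assert (0 <= (z 0%nat - w 0%nat) ^ 2) by apply pow2_ge_0. nra.
 - rewrite HK, !vsum_odd_B.
   rewrite Rmult_plus_distr_l. apply Rplus_le_compat.
   + rewrite !dvarphi_one, !sumB_zero. eqbs.
     replace (ee (z 0%nat) + 3 * 0 - (ee (w 0%nat) + 3 * 0)) with (ee (z 0%nat) - ee (w 0%nat)) by ring.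
     rewrite <- (pow2_abs (ee _ - ee _)). rewrite <- (pow2_abs (z 0%nat - w 0%nat)).
     assert (H1 := ee_lip (z 0%nat) (w 0%nat)). assert (0 <= Rabs (ee (z 0%nat) - ee (w 0%nat))) by apply Rabs_pos.
     assert (0 <= Rabs (z 0%nat - w 0%nat)) by apply Rabs_pos. nra.
   + rewrite <- vsum_scal. apply vsum_le. intros j Hj. rewrite !dvarphi_one. rewrite !sumB_a, !sumB_b by auto. eqbs.
     replace (0 + 3 * Fa (z (2 * j + 1)%nat) (z (2 * j + 2)%nat) - (0 + 3 * Fa (w (2 * j + 1)%nat) (w (2 * j + 2)%nat)))
       with (0 + 3 * (Fa (z (2 * j + 1)%nat) (z (2 * j + 2)%nat) - Fa (w (2 * j + 1)%nat) (w (2 * j + 2)%nat))) by ring.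
     replace (0 + 3 * Fb (z (2 * j + 1)%nat) (z (2 * j + 2)%nat) - (0 + 3 * Fb (w (2 * j + 1)%nat) (w (2 * j + 2)%nat)))
       with (3 * (Fb (z (2 * j + 1)%nat) (z (2 * j + 2)%nat) - Fb (w (2 * j + 1)%nat) (w (2 * j + 2)%nat))) by ring.
     apply pair_ineq; [| apply Fa_lip | apply Fb_lip].
     rewrite Rabs_R0. assert (0 <= Rabs (z (2 * j + 1)%nat - w (2 * j + 1)%nat)) by apply Rabs_pos. lra.
Qed.

Lemma divmod_eq a n r : (r < n)%nat -> ((a * n + r) / n = a /\ (a * n + r) mod n = r)%nat.
Proof. intros H. assert (Hn : n <> 0%nat) by lia. split.
 - rewrite Nat.div_add_l by auto. rewrite Nat.div_small by auto. lia.
 - rewrite Nat.add_comm, Nat.Div0.mod_add. apply Nat.mod_small; auto. Qed.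

Lemma cc_sc Lf eps m : 0 < eps -> 0 < Lf -> (0 < m)%nat -> cc eps Lf m * sc eps Lf m ^ 2 = Lf / (75 * PI).
Proof. intros He HL Hm. unfold cc, sc. assert (0 < INR m) by (apply lt_0_INR; auto).
 assert (PI > 0) by apply PI_RGT_0.
 replace ((sqrt (INR m) * Lf / (150 * PI * eps)) ^ 2) with (sqrt (INR m) ^ 2 * Lf ^ 2 / (150 * PI * eps) ^ 2)
   by (field; lra). rewrite pow2_sqrt by lra. field. repeat split; lra. Qed.

Lemma LL_le : LL <= (75 * PI) ^ 2.
Proof. unfold LL. assert (H := PI2_1). nra. Qed.

Lemma grad_lip eps Lf m n i z w : 0 < eps -> 0 < Lf -> (0 < m)%nat -> Nat.Odd n -> (5 <= n)%nat ->
  vsum n (fun r => (grad (ffun eps Lf m n i) z r - grad (ffun eps Lf m n i) w r) ^ 2)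
  <= Lf ^ 2 * vsum n (fun r => (z r - w r) ^ 2).
Proof. intros He HL Hm Ho Hn.
 set (k := cc eps Lf m * sc eps Lf m).
 rewrite (vsum_ext n (fun r => (grad (ffun eps Lf m n i) z r - grad (ffun eps Lf m n i) w r) ^ 2) (fun r => k ^ 2 * (dh m n i (scaled eps Lf m z) r - dh m n i (scaled eps Lf m w) r) ^ 2))
   by (intros; rewrite !grad_ffun; unfold k; ring).
 rewrite vsum_scal.
 assert (H1 := dh_lip m n i (scaled eps Lf m z) (scaled eps Lf m w) Ho Hn).
 rewrite (vsum_ext n (fun r => (scaled eps Lf m z r - scaled eps Lf m w r) ^ 2) (fun r => sc eps Lf m ^ 2 * (z r - w r) ^ 2)) in H1
   by (intros; unfold scaled, sc; unfold Rdiv; ring).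
 rewrite vsum_scal in H1.
 assert (0 <= vsum n (fun r => (z r - w r) ^ 2)) by (apply vsum_nonneg; intros; apply pow2_ge_0).
 assert (E : k ^ 2 * sc eps Lf m ^ 2 = (Lf / (75 * PI)) ^ 2) by (rewrite <- (cc_sc Lf eps m) by auto; unfold k; ring).
 assert (H2 := LL_le). assert (PI > 0) by apply PI_RGT_0.
 assert (E2 : (Lf / (75 * PI)) ^ 2 * (75 * PI) ^ 2 = Lf ^ 2) by (field; lra).
 assert (0 <= k ^ 2) by apply pow2_ge_0.
 eapply Rle_trans. apply Rmult_le_compat_l; [auto|apply H1].
 replace (k ^ 2 * (LL * (sc eps Lf m ^ 2 * vsum n (fun r => (z r - w r) ^ 2))))
   with ((k ^ 2 * sc eps Lf m ^ 2) * LL * vsum n (fun r => (z r - w r) ^ 2)) by ring.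
 rewrite E, <- E2. apply Rmult_le_compat_r; auto. apply Rmult_le_compat_l; [apply pow2_ge_0|auto]. Qed.

Lemma varphi_ext n z w j : (1 <= j <= n)%nat -> (forall l, (l < n)%nat -> z l = w l) -> varphi z j = varphi w j.
Proof. intros Hj H. unfold varphi, coord.
 rewrite (H (1 - 1)%nat), (H (j - 1 - 1)%nat), (H (j - 1)%nat) by lia. reflexivity. Qed.

Lemma hfun_ext m n i z w : Nat.Odd n -> (forall l, (l < n)%nat -> z l = w l) -> hfun m n i z = hfun m n i w.
Proof. intros [K HK] H. assert (HK2 : (n / 2 = K)%nat). { subst. replace (2 * K + 1)%nat with (1 + K * 2)%nat by lia. rewrite Nat.div_add by lia. auto. }
 unfold hfun. rewrite HK2. rewrite (varphi_ext n z w 1) by (auto; lia).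
 rewrite (vsum_ext K (fun j => varphi z (2 * S j)) (fun j => varphi w (2 * S j))) by (intros; apply (varphi_ext n); auto; lia).
 rewrite (vsum_ext K (fun j => varphi z (2 * S j + 1)) (fun j => varphi w (2 * S j + 1))) by (intros; apply (varphi_ext n); auto; lia).
 reflexivity. Qed.

Lemma ffun_ext eps Lf m n i z w : Nat.Odd n -> (forall l, (l < n)%nat -> z l = w l) -> ffun eps Lf m n i z = ffun eps Lf m n i w.
Proof. intros Ho H. unfold ffun. f_equal. apply hfun_ext; auto. intros l Hl. rewrite H; auto. Qed.

Lemma vsum_split_one n f r : (r < n)%nat -> vsum n f = vsum n (fun i => if Nat.eqb i r then 0 else f i) + f r.
Proof. intros Hr. assert (E := vsum_single n (fun i => if Nat.eqb i r then f i else 0) r Hr).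
 cbv beta in E. rewrite Nat.eqb_refl in E. rewrite <- E.
 - rewrite <- vsum_plus. apply vsum_ext. intros i _. destruct (Nat.eqb i r); ring.
 - intros i _ Hi. destruct (Nat.eqb_spec i r); [lia|auto]. Qed.

Lemma grad_f0 eps Lf M n x i r : Nat.Odd n -> (i < M)%nat -> (r < n)%nat ->
  grad (f0 eps Lf M n) x (i * n + r)%nat = grad (ffun eps Lf M n (S i)) (block n x i) r.
Proof. intros Ho Hi Hr. rewrite grad_ffun. unfold grad at 1, partial. apply is_derive_unique.
 set (C := vsum M (fun i' => if Nat.eqb i' i then 0 else ffun eps Lf M n (S i') (block n x i'))).
 apply (is_derive_ext (fun t => C + ffun eps Lf M n (S i) (shift (block n x i) r t))).
 - intros t. unfold f0. rewrite (vsum_split_one M _ i Hi). f_equal.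
   + apply vsum_ext. intros i' Hi'. destruct (Nat.eqb_spec i' i); [auto|].
     apply ffun_ext; auto. intros l Hl. unfold block.
     replace (Nat.eqb (i' * n + l) (i * n + r)) with false; auto. symmetry. apply Nat.eqb_neq. intros E.
     destruct (divmod_eq i' n l Hl) as [E1 _]. destruct (divmod_eq i n r Hr) as [E2 _]. rewrite E in E1. lia.
   + f_equal. apply functional_extensionality. intros l. unfold block, shift.
     destruct (Nat.eqb_spec l r).
     * subst. rewrite Nat.eqb_refl. auto.
     * replace (Nat.eqb (i * n + l) (i * n + r)) with false; auto. symmetry. apply Nat.eqb_neq. lia.
 - rewrite <- (Rplus_0_l (cc eps Lf M * _)).
   apply (is_derive_plus (fun _ => C) (fun t => ffun eps Lf M n (S i) (shift (block n x i) r t))).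
   apply (is_derive_const (V:=R_NormedModule)). apply ffun_derive. Qed.

Ltac eqbs2 := repeat match goal with
  | |- context [Nat.eqb ?a ?b] => first
       [ replace (Nat.eqb a b) with true by (symmetry; apply Nat.eqb_eq; lia)
       | replace (Nat.eqb a b) with false by (symmetry; apply Nat.eqb_neq; lia) ]
  | |- context [Nat.ltb ?a ?b] => first
       [ replace (Nat.ltb a b) with true by (symmetry; apply Nat.ltb_lt; lia)
       | replace (Nat.ltb a b) with false by (symmetry; apply Nat.ltb_ge; lia) ]
  end.

Lemma Hmat_blk Lf M n a r i s : (r < n)%nat -> (s < n)%nat ->
  Hmat Lf M n (a * n + r)%nat (i * n + s)%nat = INR M * Lf * (Jmat M a i * Imat n r s).
Proof. intros Hr Hs. unfold Hmat, kron.
 destruct (divmod_eq a n r Hr) as [E1 E2]. destruct (divmod_eq i n s Hs) as [E3 E4].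
 rewrite E1, E2, E3, E4. auto. Qed.

Lemma Hx_eq Lf M n x a r : (S a < M)%nat -> (r < n)%nat ->
  matvec (Hmat Lf M n) (M * n) x (a * n + r)%nat = INR M * Lf * (x (S a * n + r)%nat - x (a * n + r)%nat).
Proof. intros Ha Hr. unfold matvec. rewrite vsum_flat.
 rewrite (vsum_ext M _ (fun i => INR M * Lf * Jmat M a i * x (i * n + r)%nat)).
 - rewrite (vsum_two M _ a (S a)) by (try lia; intros i Hi H1 H2; unfold Jmat; eqbs2; simpl; ring).
   unfold Jmat. eqbs2. simpl. ring.
 - intros i Hi. rewrite (vsum_single n _ r Hr).
   + rewrite Hmat_blk by auto. unfold Imat. eqbs2. simpl. ring.
   + intros s Hs Hsr. rewrite Hmat_blk by auto. unfold Imat. eqbs2. simpl. ring. Qed.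

Lemma HTg_zero Lf M n gamma r : (r < n)%nat ->
  vsum M (fun i => matvec (transpose (Hmat Lf M n)) ((M - 1) * n) gamma (i * n + r)%nat) = 0.
Proof. intros Hr. unfold matvec, transpose.
 rewrite (vsum_swap M ((M - 1) * n) (fun i j => Hmat Lf M n j (i * n + r)%nat * gamma j)).
 apply vsum_zero. intros j Hj.
 assert (Hn : n <> 0%nat) by lia.
 assert (Ej : j = (j / n * n + j mod n)%nat) by (rewrite Nat.mul_comm; apply Nat.div_mod; auto).
 assert (Hm : (j mod n < n)%nat) by (apply Nat.mod_upper_bound; auto).
 assert (Ha : (j / n < M - 1)%nat) by (apply Nat.Div0.div_lt_upper_bound; lia).
 set (a := (j / n)%nat) in *. set (q := (j mod n)%nat) in *.
 rewrite (vsum_ext M _ (fun i => (INR M * Lf * Imat n q r * gamma j) * Jmat M a i)).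
 - rewrite vsum_scal. rewrite (vsum_two M _ a (S a)) by (try lia; intros i Hi H1 H2; unfold Jmat; eqbs2; simpl; ring).
   unfold Jmat. eqbs2. simpl. ring.
 - intros i Hi. rewrite Ej. rewrite Hmat_blk by auto. ring. Qed.

Lemma telescope y i : y i - y 0%nat = vsum i (fun a => y (S a) - y a).
Proof. induction i; simpl; [ring|]. rewrite <- IHi. ring. Qed.

Lemma mean_min M y c : (0 < M)%nat ->
  vsum M (fun i => (y i - / INR M * vsum M y) ^ 2) <= vsum M (fun i => (y i - c) ^ 2).
Proof. intros HM. set (yb := / INR M * vsum M y). assert (0 < INR M) by (apply lt_0_INR; auto).
 assert (Hs : vsum M y = INR M * yb) by (unfold yb; field; lra).
 rewrite (vsum_ext M (fun i => (y i - c) ^ 2) (fun i => (y i - yb) ^ 2 + ((2 * (yb - c)) * y i + (- 2 * yb * (yb - c) + (yb - c) ^ 2))))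
   by (intros; ring).
 rewrite vsum_plus, vsum_plus, vsum_scal, vsum_const, Hs.
 assert (0 <= INR M * (yb - c) ^ 2) by (apply Rmult_le_pos; [lra|apply pow2_ge_0]).
 nra. Qed.

Lemma consensus M y : (0 < M)%nat ->
  vsum M (fun i => (y i - / INR M * vsum M y) ^ 2) <= INR M ^ 2 * vsum (M - 1) (fun a => (y (S a) - y a) ^ 2).
Proof. intros HM. eapply Rle_trans; [apply (mean_min M y (y 0%nat) HM)|].
 set (Q := vsum (M - 1) (fun a => (y (S a) - y a) ^ 2)).
 apply Rle_trans with (vsum M (fun _ => INR M * Q)).
 - apply vsum_le. intros i Hi. rewrite telescope.
   eapply Rle_trans; [apply cauchy|].
   assert (0 <= vsum i (fun a => (y (S a) - y a) ^ 2)) by (apply vsum_nonneg; intros; apply pow2_ge_0).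
   assert (vsum i (fun a => (y (S a) - y a) ^ 2) <= Q) by (apply vsum_mono; [lia|intros; apply pow2_ge_0]).
   assert (INR i <= INR M) by (apply le_INR; lia). assert (0 <= INR i) by apply pos_INR.
   apply Rmult_le_compat; auto.
 - rewrite vsum_const. right. ring. Qed.

Theorem lemma6 (eps Lf : R) (m1 m2 dbar : nat)
  (Heps : 0 < eps < 1) (HLf : 0 < Lf)
  (Hm1 : (2 <= m1)%nat) (Hm2 : (1 <= m2)%nat) (Hev : Nat.Even (m1 * m2))
  (Hodd : Nat.Odd dbar) (Hd5 : (5 <= dbar)%nat) :
  let m := (3 * m1 * m2)%nat in
  let d := (m * dbar)%nat in
  forall x gamma : nat -> R,
  let xbar := fun k => / INR m * vsum m (fun i => block dbar x i k) in
  Rmax (vnorm ((m - 1) * dbar) (matvec (Hmat Lf m dbar) d x))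
       (vnorm d (fun k => grad (f0 eps Lf m dbar) x k
                          + matvec (transpose (Hmat Lf m dbar)) ((m - 1) * dbar) gamma k))
  >= sqrt (INR m) / 2 *
     vnorm dbar (fun k => / INR m * vsum m (fun i => grad (ffun eps Lf m dbar (S i)) xbar k)).
Proof.
 intros m d x gamma xbar.
 assert (HM : (0 < m)%nat) by (unfold m; lia).
 assert (HMR : 0 < INR m) by (apply lt_0_INR; auto).
 set (n := dbar) in *.
 set (g := fun k => grad (f0 eps Lf m n) x k + matvec (transpose (Hmat Lf m n)) ((m - 1) * n) gamma k).
 set (SB := vsum d (fun k => g k ^ 2)).
 set (SA := vsum ((m - 1) * n) (fun j => matvec (Hmat Lf m n) d x j ^ 2)).
 set (G := fun i z r => grad (ffun eps Lf m n (S i)) z r).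
 set (U := fun r => vsum m (fun i => G i xbar r)).
 set (SS := fun r => vsum m (fun i => g (i * n + r)%nat)).
 assert (C1 : vsum n (fun r => SS r ^ 2) <= INR m * SB).
 { apply Rle_trans with (vsum n (fun r => INR m * vsum m (fun i => g (i * n + r)%nat ^ 2))).
   - apply vsum_le. intros r Hr. apply cauchy.
   - rewrite vsum_scal. right. f_equal. unfold SB, d. rewrite vsum_flat. apply vsum_swap. }
 assert (C2 : forall r, (r < n)%nat -> SS r = vsum m (fun i => G i (block n x i) r)).
 { intros r Hr. unfold SS, g. rewrite vsum_plus. rewrite HTg_zero by auto. rewrite Rplus_0_r.
   apply vsum_ext. intros i Hi. unfold G. apply grad_f0; auto. }
 assert (C3 : vsum n (fun r => (SS r - U r) ^ 2) <= INR m * SA).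
 { set (D := fun i r => (G i (block n x i) r - G i xbar r)).
   apply Rle_trans with (vsum n (fun r => INR m * vsum m (fun i => D i r ^ 2))).
   { apply vsum_le. intros r Hr. rewrite C2 by auto. unfold U. rewrite <- vsum_minus. apply cauchy. }
   rewrite vsum_scal, vsum_swap.
   set (del := fun a r => (x (S a * n + r)%nat - x (a * n + r)%nat) ^ 2).
   assert (ESA : SA = INR m ^ 2 * Lf ^ 2 * vsum n (fun r => vsum (m - 1) (fun a => del a r))).
   { unfold SA. rewrite vsum_flat, vsum_swap, <- vsum_scal. apply vsum_ext. intros r Hr.
     rewrite <- vsum_scal. apply vsum_ext. intros a Ha. rewrite Hx_eq by (auto; lia). unfold del. ring. }
   rewrite ESA.
   apply Rle_trans with (INR m * vsum m (fun i => Lf ^ 2 * vsum n (fun r => (block n x i r - xbar r) ^ 2))).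
   { apply Rmult_le_compat_l; [lra|]. apply vsum_le. intros i Hi. unfold D, G. apply grad_lip; auto; lra. }
   rewrite vsum_scal, vsum_swap.
   apply Rle_trans with (INR m * (Lf ^ 2 * vsum n (fun r => INR m ^ 2 * vsum (m - 1) (fun a => del a r)))).
   { apply Rmult_le_compat_l; [lra|]. apply Rmult_le_compat_l; [apply pow2_ge_0|].
     apply vsum_le. intros r Hr. unfold del, xbar, block. apply (consensus m (fun i => x (i * n + r)%nat) HM). }
   rewrite vsum_scal. right. ring. }
 assert (C4 : vsum n (fun r => U r ^ 2) <= 2 * INR m * SB + 2 * INR m * SA).
 { apply Rle_trans with (vsum n (fun r => 2 * SS r ^ 2 + 2 * (SS r - U r) ^ 2)).
   - apply vsum_le. intros r _. assert (0 <= (SS r + (SS r - U r)) ^ 2) by apply pow2_ge_0. nra.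
   - rewrite vsum_plus, !vsum_scal. lra. }
 assert (EA : vnorm ((m - 1) * n) (matvec (Hmat Lf m n) d x) = sqrt SA) by reflexivity.
 assert (EB : vnorm d g = sqrt SB) by reflexivity.
 set (T := vsum n (fun r => U r ^ 2)) in *.
 assert (ET : vnorm n (fun k => / INR m * vsum m (fun i => grad (ffun eps Lf m n (Datatypes.S i)) xbar k)) = sqrt (/ INR m ^ 2 * T)).
 { unfold vnorm. f_equal. unfold T. rewrite <- vsum_scal. apply vsum_ext. intros. unfold U, G. field. lra. }
 rewrite EA, EB, ET.
 assert (HA0 : 0 <= SA) by (apply vsum_nonneg; intros; apply pow2_ge_0).
 assert (HB0 : 0 <= SB) by (apply vsum_nonneg; intros; apply pow2_ge_0).
 assert (HT0 : 0 <= T) by (apply vsum_nonneg; intros; apply pow2_ge_0).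
 assert (HY : 0 <= / INR m ^ 2 * T) by (apply Rmult_le_pos; [left; apply Rinv_0_lt_compat; apply pow_lt; lra | auto]).
 set (Mx := Rmax (sqrt SA) (sqrt SB)).
 assert (HM0 : 0 <= Mx) by (unfold Mx; eapply Rle_trans; [apply sqrt_pos|apply Rmax_l]).
 assert (HmA : SA <= Mx * Mx).
 { rewrite <- (sqrt_sqrt SA) by auto. assert (sqrt SA <= Mx) by apply Rmax_l. assert (0 <= sqrt SA) by apply sqrt_pos. nra. }
 assert (HmB : SB <= Mx * Mx).
 { rewrite <- (sqrt_sqrt SB) by auto. assert (sqrt SB <= Mx) by apply Rmax_r. assert (0 <= sqrt SB) by apply sqrt_pos. nra. }
 apply Rle_ge. apply Rsqr_incr_0_var; [|auto]. unfold Rsqr.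
 replace (sqrt (INR m) / 2 * sqrt (/ INR m ^ 2 * T) * (sqrt (INR m) / 2 * sqrt (/ INR m ^ 2 * T)))
   with ((sqrt (INR m) * sqrt (INR m)) / 4 * (sqrt (/ INR m ^ 2 * T) * sqrt (/ INR m ^ 2 * T))) by field.
 rewrite !sqrt_sqrt by lra.
 replace (INR m / 4 * (/ INR m ^ 2 * T)) with (T * / (4 * INR m)) by (field; lra).
 assert (0 < / (4 * INR m)) by (apply Rinv_0_lt_compat; lra).
 apply Rle_trans with ((2 * INR m * SB + 2 * INR m * SA) * / (4 * INR m)).
 - apply Rmult_le_compat_r; lra.
 - replace ((2 * INR m * SB + 2 * INR m * SA) * / (4 * INR m)) with ((SA + SB) / 2) by (field; lra). lra.
Qed.
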